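(* Assume $\alpha=2$, the far-destination approximation (every relay–destination distance equals $d$), and condition on $N\ge1$. Let $i^*$ be the relay closest to the source; conditioned on $N\ge1$, its distance $d_{i^*}$ has density $f(r)=2\zeta\pi\lambda r e^{-\pi\lambda r^2}$ on $[0,R_{\mathcal D}]$ with $\zeta=1/(1-e^{-\pi\lambda R_{\mathcal D}^2})$. Define $$\mathcal{P}_2(P)=\mathcal{P}\big(x_0+\eta y_{i^*}(x_{i^*}-\epsilon)<\epsilon,\ x_{i^*}>\epsilon\big)+\mathcal{P}\big(x_0<\epsilon,\ x_{i^*}<\epsilon\big),$$ with $x_{i^*}=|h_{i^*}|^2/(1+d_{i^*}^2)$, $y_{i^*}=|g_{i^*}|^2/(1+d^2)$. Then the diversity gain of this selection scheme is $2$: $-\lim_{P\to\infty}\frac{\log\mathcal{P}_2(P)}{\log P}=2$.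
   Context: Source at origin, destination at distance $d>0$; relays form a homogeneous Poisson point process of intensity $\lambda>0$ in the disc of radius $R_{\mathcal D}$ centred at the source. Fading $h_d,h_{i^*},g_{i^*}$ independent $\mathcal{CN}(0,1)$, independent of locations; $x_0=|h_d|^2/(1+d^2)$. $\tau=2^{2R}-1$ for target rate $R>0$, $\epsilon=\tau/P$ with transmit power $P$, $\eta\in(0,1]$ energy harvesting efficiency. Relay decodes iff $x_{i^*}>\epsilon$ and forwards with harvested power $\eta(Px_{i^*}-\tau)$; outage when combined SNR $P(x_0+\eta y_{i^*}(x_{i^*}-\epsilon))<\tau$. *)

(* Defs.v *)
From Stdlib Require Import Reals.
Open Scope R_scope.

Definition is_RInt (f : R -> R) (a b v : R) : Prop :=
  exists pr : Riemann_integrable f a b, RiemannInt pr = v.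

Definition is_RInt_infty (f : R -> R) (a v : R) : Prop :=
  (forall b, a <= b -> inhabited (Riemann_integrable f a b)) /\
  (forall e, 0 < e -> exists M, forall b (pr : Riemann_integrable f a b),
      M <= b -> Rabs (RiemannInt pr - v) < e).

Definition zeta (lam RD : R) : R := / (1 - exp (- (PI * lam * RD ^ 2))).
Definition dens_closest (lam RD r : R) : R :=
  2 * zeta lam RD * PI * lam * r * exp (- (PI * lam * r ^ 2)).

Definition tau (Rt : R) : R := Rpower 2 (2 * Rt) - 1.
Definition epsP (Rt P : R) : R := tau Rt / P.

(* Since |h|^2 ~ Exp(1), x = |h|^2/(1+s^2) is exponential with rate 1+s^2:
   CDF  1 - exp(-(1+s^2) t)  and density (1+s^2) exp(-(1+s^2) t) on t >= 0. *)
Definition exp_cdf (rate t : R) : R := 1 - exp (- (rate * t)).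
Definition exp_pdf (rate t : R) : R := rate * exp (- (rate * t)).

(* is_P2 d lam RD eta Rt P v  :  v = P2(P) where
   P2(P) = Pr(x0 + eta*y*(x-eps) < eps, x > eps) + Pr(x0 < eps, x < eps),
   x0 ~ Exp(1+d^2), y ~ Exp(1+d^2), x | r ~ Exp(1+r^2), r ~ dens_closest,
   all independent (given r).  The first probability is written as
     int_0^RD f(r) int_eps^oo p_x(x|r) int_0^{eps/(eta (x-eps))} p_y(y)
        F_{x0}(eps - eta y (x-eps)) dy dx dr
   (the constraint x0 + eta y (x-eps) < eps with x0 >= 0 forces
    y < eps / (eta (x - eps))). *)
Definition is_P2 (d lam RD eta Rt P v : R) : Prop :=
  let e := epsP Rt P in
  let b := 1 + d ^ 2 in
  exists (H : R -> R) (G : R -> R) (T1 T2 : R),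
    (forall x, e < x ->
       is_RInt (fun y => exp_pdf b y * exp_cdf b (e - eta * y * (x - e)))
               0 (e / (eta * (x - e))) (H x)) /\
    (forall r, 0 <= r <= RD ->
       is_RInt_infty (fun x => exp_pdf (1 + r ^ 2) x * H x) e (G r)) /\
    is_RInt (fun r => dens_closest lam RD r * G r) 0 RD T1 /\
    is_RInt (fun r => dens_closest lam RD r * exp_cdf (1 + r ^ 2) e) 0 RD T2 /\
    v = T1 + exp_cdf b e * T2.

(* Main.v *)
Require Import Defs.
From Stdlib Require Import Reals Lra Lia.
From Stdlib Require Import IndefiniteDescription.
From Coquelicot Require Import Coquelicot.
Open Scope R_scope.

Lemma bridge f a b l : is_RInt f a b l -> Defs.is_RInt f a b l.
Proof.
  intros H. assert (ex : ex_RInt f a b) by (exists l; exact H).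
  exists (ex_RInt_Reals_0 _ _ _ ex). rewrite <- RInt_Reals.
  apply is_RInt_unique; exact H.
Qed.

Lemma defs_val f a b l (pr: Riemann_integrable f a b) :
  Defs.is_RInt f a b l -> RiemannInt pr = l.
Proof. intros [pr' H]; rewrite <- H; apply RiemannInt_P5. Qed.

Lemma ftc (F f : R -> R) a b :
  (forall x, Rmin a b <= x <= Rmax a b -> is_derive F x (f x)) ->
  (forall x, Rmin a b <= x <= Rmax a b -> continuous f x) ->
  is_RInt f a b (F b - F a).
Proof. intros H1 H2. exact (is_RInt_derive F f a b H1 H2). Qed.

Lemma cont_of_der f x : ex_derive f x -> continuity_pt f x.
Proof. intros H; apply continuity_pt_filterlim; exact (@ex_derive_continuous R_AbsRing R_NormedModule f x H). Qed.

Lemma cont_of_pt f x : continuity_pt f x -> continuous f x.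
Proof. intros H; apply continuity_pt_filterlim; exact H. Qed.

Example test (b : R) : forall x, continuity_pt (fun y => b * exp (- (b*y))) x.
Proof. intros x; apply cont_of_der; auto_derive; auto. Qed.

Lemma RI_bounds f a b l u (pr : Riemann_integrable f a b) : a <= b ->
  (forall x, a < x < b -> l <= f x <= u) -> l * (b - a) <= RiemannInt pr <= u * (b - a).
Proof. intros. apply RiemannInt_const_bound; auto. Qed.

Lemma RI_ge0 f a b (pr : Riemann_integrable f a b) : a <= b ->
  (forall x, a < x < b -> 0 <= f x) -> 0 <= RiemannInt pr.
Proof.
  intros Hab H.
  pose proof (RiemannInt_P19 (RiemannInt_P14 a b 0) pr Hab) as H0.
  rewrite RiemannInt_P15 in H0. unfold fct_cte in H0.
  assert (0 * (b - a) <= RiemannInt pr); [|lra]. apply H0. intros; apply H; auto.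
Qed.

Lemma RInt_plusR f g a b : ex_RInt f a b -> ex_RInt g a b ->
  RInt (fun x => f x + g x) a b = RInt f a b + RInt g a b.
Proof. intros H H0; exact (RInt_plus f g a b H H0). Qed.

Lemma RInt_scalR f a b k : ex_RInt f a b ->
  RInt (fun x => k * f x) a b = k * RInt f a b.
Proof. intros H; exact (RInt_scal f a b k H). Qed.

Lemma ex_RInt_plusR f g a b : ex_RInt f a b -> ex_RInt g a b -> ex_RInt (fun x => f x + g x) a b.
Proof. intros H H0; exact (ex_RInt_plus f g a b H H0). Qed.

Lemma ex_RInt_scalR f a b k : ex_RInt f a b -> ex_RInt (fun x => k * f x) a b.
Proof. intros H; exact (ex_RInt_scal f a b k H). Qed.

Lemma RInt_ChaslesR f a b c : ex_RInt f a b -> ex_RInt f b c ->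
  RInt f a b + RInt f b c = RInt f a c.
Proof. intros H H0; exact (RInt_Chasles f a b c H H0). Qed.

Lemma ex_RInt_cont f a b : (forall x, continuity_pt f x) -> ex_RInt f a b.
Proof. intros H. apply (@ex_RInt_continuous R_CompleteNormedModule). intros z _. apply cont_of_pt, H. Qed.

Lemma RI_RInt f a b (pr : Riemann_integrable f a b) : RiemannInt pr = RInt f a b.
Proof. symmetry; apply RInt_Reals. Qed.

Lemma RInt_val (f : R -> R) (a b l : R) : is_RInt f a b l -> RInt f a b = l.
Proof. apply (@is_RInt_unique R_CompleteNormedModule). Qed.

Lemma RInt_constR (a b c : R) : RInt (fun _ => c) a b = (b - a) * c.
Proof. exact (RInt_const a b c). Qed.

Lemma ex_RInt_Ch1 (f : R -> R) a b c : a <= b <= c -> ex_RInt f a c -> ex_RInt f a b.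
Proof. apply (@ex_RInt_Chasles_1 R_CompleteNormedModule). Qed.

Lemma ex_RInt_Ch2 (f : R -> R) a b c : a <= b <= c -> ex_RInt f a c -> ex_RInt f b c.
Proof. apply (@ex_RInt_Chasles_2 R_CompleteNormedModule). Qed.

Lemma ex_RInt_constR (a b c : R) : ex_RInt (fun _ => c) a b.
Proof. exact (ex_RInt_const a b c). Qed.

Lemma ex_RInt_of_pr (f : R -> R) a b : Riemann_integrable f a b -> ex_RInt f a b.
Proof. apply ex_RInt_Reals_1. Qed.

Lemma exp_le1 x : 0 <= x -> exp (- x) <= 1.
Proof.
  intros H. destruct (Req_dec x 0) as [Z|Z].
  - subst. rewrite Ropp_0, exp_0. lra.
  - rewrite <- exp_0. apply Rlt_le, exp_increasing. lra.
Qed.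

Definition phi (c w : R) : R := if Req_EM_T w 0 then c else (1 - exp (- (c * w))) / w.
Definition Hc (b e eta x : R) : R :=
  if Rle_dec x e then 1 - exp (- (b*e))
  else 1 - exp (- (b*e / (eta * (x - e)))) - exp (- (b*e)) / (eta * (x - e))
           * phi (b*e) ((1 - eta * (x - e))/(eta * (x - e))).

Lemma Hc_int b e eta x : 0<b -> 0<e -> 0<eta -> e < x ->
  Defs.is_RInt (fun y => exp_pdf b y * exp_cdf b (e - eta*y*(x-e))) 0 (e/(eta*(x-e))) (Hc b e eta x).
Proof.
  intros Hb He Heta Hx.
  unfold Hc. destruct (Rle_dec x e) as [Hle|_]; [lra|].
  assert (Hs : 0 < eta*(x-e)) by (apply Rmult_lt_0_compat; lra).
  set (s := eta*(x-e)) in *.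
  unfold phi. destruct (Req_EM_T ((1-s)/s) 0) as [H1|H1].
  - assert (Hs1 : s = 1).
    { assert (1 - s = 0). { apply (Rmult_eq_reg_r (/s)). rewrite Rmult_0_l. exact H1.
        apply Rinv_neq_0_compat; lra. } lra. }
    apply bridge.
    set (F := fun y => - exp (-(b*y)) - b * exp (-(b*e)) * y).
    replace (1 - exp (- (b * e / s)) - exp (- (b * e)) / s * (b * e)) with (F (e/s) - F 0).
    2:{ unfold F. rewrite Hs1. rewrite !Rdiv_1_r. rewrite Rmult_0_r, Ropp_0, exp_0. ring. }
    apply ftc.
    + intros y _. unfold F. auto_derive; auto.
      unfold exp_pdf, exp_cdf. unfold s in Hs1.
      assert (Hy : eta*y*(x-e) = y) by (replace (eta*y*(x-e)) with (y*(eta*(x-e))) by ring; rewrite Hs1; ring).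
      rewrite Hy.
      replace (b * (e - y)) with (b*e - b*y) by ring.
      replace (- (b*e - b*y)) with (-(b*e) + b*y) by ring.
      rewrite exp_plus.
      replace (exp (b*y)) with (/ exp (-(b*y))).
      2:{ rewrite <- exp_Ropp. f_equal; ring. }
      field. apply Rgt_not_eq, exp_pos.
    + intros y _. apply cont_of_pt, cont_of_der. unfold exp_pdf, exp_cdf. auto_derive; auto.
  - assert (Hs1 : 1 - s <> 0).
    { intro H0. apply H1. rewrite H0. unfold Rdiv; ring. }
    apply bridge.
    set (F := fun y => - exp (-(b*y)) + exp (-(b*y)) * exp (-(b*(e - eta*y*(x-e)))) / (1-s)).
    replace (1 - exp (- (b * e / s)) - exp (- (b * e)) / s * ((1 - exp (- (b * e * ((1 - s) / s)))) / ((1 - s) / s)))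
      with (F (e/s) - F 0).
    2:{ unfold F. fold s.
        replace (e - eta * (e/s) * (x-e)) with 0 by (unfold s; field; lra).
        replace (e - eta * 0 * (x-e)) with e by ring.
        rewrite Rmult_0_r, Ropp_0, exp_0.
        replace (- (b * e * ((1 - s) / s))) with (- (b*(e/s)) + b*e) by (field; lra).
        rewrite exp_plus.
        replace (b * e / s) with (b * (e/s)) by (field; lra).
        replace (exp (b*e)) with (/ exp (-(b*e))).
        2:{ rewrite <- exp_Ropp. f_equal; ring. }
        field. repeat split; try (apply Rgt_not_eq, exp_pos); lra. }
    apply ftc.
    + intros y _. unfold F. auto_derive; auto.
      unfold exp_pdf, exp_cdf. replace (e + - (eta * y * (x - e))) with (e - eta * y * (x - e)) by ring.
      unfold s in *. field. exact Hs1.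
    + intros y _. apply cont_of_pt, cont_of_der. unfold exp_pdf, exp_cdf. auto_derive; auto.
Qed.

Lemma cont_eps f x : (forall eps, 0 < eps -> exists del, 0 < del /\
   forall y, Rabs (y - x) < del -> Rabs (f y - f x) < eps) -> continuity_pt f x.
Proof.
  intros H eps Heps. destruct (H eps Heps) as [del [Hd H2]].
  exists del; split; [lra|]. intros y [_ Hy]. simpl in *. unfold Rdist in *. apply H2; exact Hy.
Qed.

Lemma phi_cont c w : 0 < c -> continuity_pt (phi c) w.
Proof.
  intros Hc. destruct (Req_EM_T w 0) as [Hw|Hw].
  - subst w. apply cont_eps. intros eps Heps.
    assert (He' : 0 < eps / c) by (apply Rdiv_lt_0_compat; lra).
    destruct (derivable_pt_lim_exp_0 _ He') as [del Hdel].
    exists (del / c). split. { apply Rdiv_lt_0_compat; [apply cond_pos|lra]. }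
    intros y Hy. unfold phi. destruct (Req_EM_T 0 0) as [_|C]; [|congruence].
    destruct (Req_EM_T y 0) as [Hy0|Hy0].
    { rewrite Rminus_diag, Rabs_R0; lra. }
    assert (Hh : - (c*y) <> 0). { intro H0. apply Hy0. apply (Rmult_eq_reg_l c); [|lra]. lra. }
    assert (Hh2 : Rabs (- (c*y)) < del).
    { rewrite Rabs_Ropp, Rabs_mult, (Rabs_right c) by lra.
      rewrite Rminus_0_r in Hy. apply (Rmult_lt_compat_l c) in Hy; [|lra].
      replace (c * (del / c)) with (pos del) in Hy by (field; lra). lra. }
    specialize (Hdel _ Hh Hh2). rewrite Rplus_0_l, exp_0 in Hdel.
    replace ((1 - exp (- (c * y))) / y - c) with (c * ((exp (- (c*y)) - 1) / (- (c*y)) - 1)) by (field; lra).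
    rewrite Rabs_mult, (Rabs_right c) by lra.
    apply (Rmult_lt_compat_l c) in Hdel; [|lra].
    replace (c * (eps / c)) with eps in Hdel by (field; lra). lra.
  - apply continuity_pt_locally_ext with (f := fun w => (1 - exp (- (c*w))) / w) (a := Rabs w).
    + apply Rabs_pos_lt; auto.
    + intros y Hy. unfold phi. destruct (Req_EM_T y 0) as [Hy0|Hy0]; [|reflexivity].
      subst y. unfold Rdist in Hy. rewrite Rminus_0_l, Rabs_Ropp in Hy. lra.
    + apply cont_of_der. auto_derive. auto.
Qed.

Lemma phi_nonneg c w : 0 < c -> 0 <= phi c w.
Proof.
  intros Hc. unfold phi. destruct (Req_EM_T w 0) as [_|Hw]; [lra|].
  destruct (Rlt_or_le 0 w) as [Hp|Hn].
  - apply Rdiv_le_0_compat; [|lra].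
    assert (exp (- (c*w)) <= 1). { rewrite <- exp_0. apply exp_le_3 || (apply Rlt_le, exp_increasing; nra). }
    lra.
  - assert (Hn' : w < 0) by lra.
    replace ((1 - exp (- (c * w))) / w) with ((exp (- (c*w)) - 1) / (- w)) by (field; lra).
    apply Rdiv_le_0_compat; [|lra].
    assert (1 <= exp (- (c*w))). { rewrite <- exp_0. apply Rlt_le, exp_increasing; nra. }
    lra.
Qed.

Lemma Dform c s : 0 < s -> s <> 1 ->
  exp (- c) / s * phi c ((1 - s)/s) = (exp (- c) - exp (- (c/s))) / (1 - s).
Proof.
  intros Hs Hs1. unfold phi. destruct (Req_EM_T ((1-s)/s) 0) as [H0|H0].
  { exfalso. apply Hs1. assert (1 - s = 0); [|lra].
    apply (Rmult_eq_reg_r (/s)); [|apply Rinv_neq_0_compat; lra]. rewrite Rmult_0_l; exact H0. }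
  replace (- (c * ((1 - s)/s))) with (- (c/s) + c) by (field; lra).
  rewrite exp_plus. replace (exp c) with (/ exp (-c)) by (rewrite <- exp_Ropp; f_equal; ring).
  field. repeat split; try (apply Rgt_not_eq, exp_pos); lra.
Qed.

Lemma Hc_cont b e eta x : 0<b -> 0<e -> 0<eta -> continuity_pt (Hc b e eta) x.
Proof.
  intros Hb He Heta.
  assert (Hcpos : 0 < b*e) by nra.
  destruct (Rtotal_order x e) as [Hlt|[Heq|Hgt]].
  - apply continuity_pt_locally_ext with (f := fun _ => 1 - exp (- (b*e))) (a := e - x); [lra| |].
    + intros y Hy. unfold Hc. unfold Rdist in Hy. destruct (Rle_dec y e) as [_|C]; [reflexivity|].
      exfalso; apply C. apply Rabs_def2 in Hy. lra.
    + apply continuity_pt_const. intros u v; reflexivity.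
  - subst x. apply cont_eps. intros eps Heps.
    exists (Rmin (/(2*eta)) (eps/(2*eta))). split.
    { apply Rmin_pos; [apply Rinv_0_lt_compat; lra | apply Rdiv_lt_0_compat; lra]. }
    intros y Hy. unfold Hc at 2. destruct (Rle_dec e e) as [_|C]; [|lra].
    unfold Hc. destruct (Rle_dec y e) as [Hle|Hgt].
    { rewrite Rminus_diag, Rabs_R0; lra. }
    assert (Hy1 : y - e < / (2*eta)) by (apply Rabs_def2 in Hy; pose proof (Rmin_l (/(2*eta)) (eps/(2*eta))); lra).
    assert (Hy2 : y - e < eps / (2*eta)) by (apply Rabs_def2 in Hy; pose proof (Rmin_r (/(2*eta)) (eps/(2*eta))); lra).
    assert (Hs : 0 < eta*(y-e)) by (apply Rmult_lt_0_compat; lra).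
    assert (Hs2 : eta*(y-e) < /2).
    { apply (Rmult_lt_compat_l eta) in Hy1; [|lra]. replace (eta * / (2*eta)) with (/2) in Hy1 by (field; lra). lra. }
    assert (Hs3 : 2*(eta*(y-e)) < eps).
    { apply (Rmult_lt_compat_l (2*eta)) in Hy2; [|lra]. replace (2*eta * (eps / (2*eta))) with eps in Hy2 by (field; lra). lra. }
    set (s := eta*(y-e)) in *.
    rewrite (Dform (b*e) s Hs) by lra.
    set (E0 := exp (- (b*e))). set (E1 := exp (- (b*e/s))).
    assert (0 < E0 <= 1). { split. apply exp_pos. unfold E0; rewrite <- exp_0; apply Rlt_le, exp_increasing; lra. }
    assert (0 < E1 <= 1). { split. apply exp_pos. unfold E1; rewrite <- exp_0; apply Rlt_le, exp_increasing.
      assert (0 < b*e/s) by (apply Rdiv_lt_0_compat; lra). lra. }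
    replace (1 - E1 - (E0 - E1) / (1 - s) - (1 - E0)) with (- ((E0 - E1) * (s / (1 - s)))) by (field; lra).
    rewrite Rabs_Ropp, Rabs_mult.
    assert (Rabs (E0 - E1) <= 1) by (apply Rabs_le; lra).
    assert (Rabs (s/(1-s)) <= 2*s).
    { rewrite Rabs_right by (apply Rle_ge, Rdiv_le_0_compat; lra).
      apply (Rmult_le_reg_r (1-s)); [lra|]. unfold Rdiv. rewrite Rmult_assoc, Rinv_l by lra. nra. }
    assert (0 <= Rabs (s/(1-s))) by apply Rabs_pos.
    assert (0 <= Rabs (E0 - E1)) by apply Rabs_pos.
    nra.
  - set (K := fun y => 1 - exp (- (b*e / (eta * (y - e)))) - exp (- (b*e)) / (eta * (y - e))
           * phi (b*e) ((1 - eta * (y - e))/(eta * (y - e)))).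
    apply continuity_pt_locally_ext with (f := K) (a := x - e); [lra| |].
    + intros y Hy. unfold Hc, K. unfold Rdist in Hy. destruct (Rle_dec y e) as [C|_]; [|reflexivity].
      exfalso. apply Rabs_def2 in Hy. lra.
    + assert (Hs : eta*(x-e) <> 0) by (apply Rgt_not_eq, Rmult_lt_0_compat; lra).
      unfold K. apply continuity_pt_minus.
      * apply cont_of_der. auto_derive. auto.
      * apply continuity_pt_mult.
        -- apply cont_of_der. auto_derive. auto.
        -- apply (continuity_pt_comp (fun y => (1 - eta * (y - e))/(eta * (y - e))) (phi (b*e))).
           ++ apply cont_of_der. auto_derive. auto.
           ++ apply phi_cont; auto.
Qed.

Lemma Hc_le1 b e eta x : 0<b -> 0<e -> 0<eta -> Hc b e eta x <= 1.
Proof.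
  intros Hb He Heta. unfold Hc. destruct (Rle_dec x e).
  - pose proof (exp_pos (- (b*e))); lra.
  - assert (Hs : 0 < eta*(x-e)) by (apply Rmult_lt_0_compat; lra).
    pose proof (exp_pos (- (b*e / (eta*(x-e))))).
    pose proof (phi_nonneg (b*e) ((1 - eta * (x - e))/(eta * (x - e)))).
    assert (0 <= exp (- (b*e)) / (eta * (x - e))) by (apply Rdiv_le_0_compat; [apply Rlt_le, exp_pos|lra]).
    assert (0 < b*e) by nra.
    nra.
Qed.

Lemma integrand_nonneg b e eta x y : 0<b -> 0<e -> 0<eta -> e < x ->
  0 <= y <= e/(eta*(x-e)) -> 0 <= exp_pdf b y * exp_cdf b (e - eta*y*(x-e)).
Proof.
  intros Hb He Heta Hx Hy.
  assert (Hs : 0 < eta*(x-e)) by (apply Rmult_lt_0_compat; lra).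
  apply Rmult_le_pos.
  - unfold exp_pdf. pose proof (exp_pos (- (b*y))); nra.
  - unfold exp_cdf. assert (Ht : 0 <= e - eta*y*(x-e)).
    { destruct Hy as [_ Hy]. apply (Rmult_le_compat_r (eta*(x-e))) in Hy; [|lra].
      replace (e/(eta*(x-e)) * (eta*(x-e))) with e in Hy by (field; lra). nra. }
    assert (exp (- (b * (e - eta*y*(x-e)))) <= 1).
    { rewrite <- exp_0. destruct (Req_dec (b * (e - eta*y*(x-e))) 0) as [Z|Z].
      - rewrite Z, Ropp_0; lra.
      - apply Rlt_le, exp_increasing. assert (0 <= b * (e - eta*y*(x-e))) by nra. lra. }
    lra.
Qed.

Lemma Hc_ge0 b e eta x : 0<b -> 0<e -> 0<eta -> 0 <= Hc b e eta x.
Proof.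
  intros Hb He Heta. destruct (Rle_dec x e) as [Hle|Hgt].
  - unfold Hc. destruct (Rle_dec x e); [|contradiction].
    assert (exp (- (b*e)) <= 1) by (rewrite <- exp_0; apply Rlt_le, exp_increasing; nra). lra.
  - assert (Hx : e < x) by lra.
    destruct (Hc_int b e eta x Hb He Heta Hx) as [pr Hpr]. rewrite <- Hpr.
    assert (HY : 0 <= e/(eta*(x-e))) by (apply Rlt_le, Rdiv_lt_0_compat; [lra| apply Rmult_lt_0_compat; lra]).
    apply RI_ge0; auto. intros y Hy. apply integrand_nonneg; auto; lra.
Qed.

Lemma pdf_cont a x : continuity_pt (exp_pdf a) x.
Proof. apply cont_of_der. unfold exp_pdf. auto_derive. auto. Qed.

Lemma q_cont b e eta a x : 0<b -> 0<e -> 0<eta ->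
  continuity_pt (fun x => exp_pdf a x * Hc b e eta x) x.
Proof. intros. apply continuity_pt_mult; [apply pdf_cont | apply Hc_cont; auto]. Qed.

Lemma pdf_int a u v : 0 < a -> RInt (exp_pdf a) u v = exp (- (a*u)) - exp (- (a*v)).
Proof.
  intros Ha. apply RInt_val.
  replace (exp (- (a*u)) - exp (- (a*v))) with ((fun x => - exp (- (a*x))) v - (fun x => - exp (- (a*x))) u) by ring.
  apply (ftc (fun x => - exp (- (a*x))) (exp_pdf a) u v).
  - intros x _. auto_derive; auto. unfold exp_pdf. ring.
  - intros x _. apply cont_of_pt, pdf_cont.
Qed.

Lemma Gl_exists b e eta a : 0<b -> 0<e -> 0<eta -> 0<a ->
  exists L, is_RInt_infty (fun x => exp_pdf a x * Hc b e eta x) e L.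
Proof.
  intros Hb He Heta Ha.
  set (q := fun x => exp_pdf a x * Hc b e eta x).
  assert (qc : forall x, continuity_pt q x) by (intros; apply q_cont; auto).
  assert (qpos : forall x, 0 <= q x).
  { intros x. unfold q, exp_pdf. apply Rmult_le_pos; [|apply Hc_ge0; auto].
    pose proof (exp_pos (- (a*x))); nra. }
  set (E := fun v => exists B, e <= B /\ v = RInt q e B).
  assert (Ebd : bound E).
  { exists 1. intros v [B [HB ->]].
    apply Rle_trans with (RInt (exp_pdf a) e B).
    - apply RInt_le; [exact HB | apply ex_RInt_cont; exact qc | apply ex_RInt_cont; intros; apply pdf_cont |].
      intros x _. unfold q. pose proof (Hc_le1 b e eta x Hb He Heta).
      unfold exp_pdf. pose proof (exp_pos (- (a*x))).
      assert (0 <= a * exp (- (a*x))) by nra. nra.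
    - rewrite pdf_int by auto. pose proof (exp_pos (- (a*B))).
      assert (exp (- (a*e)) <= 1) by (rewrite <- exp_0; apply Rlt_le, exp_increasing; nra). lra. }
  assert (Ene : exists v, E v) by (exists (RInt q e e); exists e; split; [lra|reflexivity]).
  destruct (completeness E Ebd Ene) as [L [HL1 HL2]].
  exists L. split.
  - intros B HB. constructor. apply continuity_implies_RiemannInt; auto.
  - intros eps Heps.
    assert (HB0 : exists B0, e <= B0 /\ L - eps < RInt q e B0).
    { destruct (Rlt_or_le (L - eps) L) as [_|]; [|lra].
      apply Classical_Pred_Type.not_all_not_ex. intros Hn.
      assert (L <= L - eps); [|lra]. apply HL2. intros v [B [HB ->]].
      destruct (Rle_or_lt (RInt q e B) (L - eps)) as [|Hc0]; auto.
      exfalso; apply (Hn B); auto. }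
    destruct HB0 as [B0 [HB0 HB0']].
    exists B0. intros B pr HB. rewrite RI_RInt.
    assert (HI : RInt q e B0 <= RInt q e B).
    { rewrite <- (RInt_ChaslesR q e B0 B) by (apply ex_RInt_cont; auto).
      assert (0 <= RInt q B0 B); [|lra].
      apply RInt_ge_0; auto. apply ex_RInt_cont; auto. }
    assert (HI2 : RInt q e B <= L) by (apply HL1; exists B; split; [lra|reflexivity]).
    apply Rabs_def1; lra.
Qed.

Lemma le_eps x y : (forall eps, 0 < eps -> x <= y + eps) -> x <= y.
Proof.
  intros H. destruct (Rle_or_lt x y) as [|Hlt]; auto.
  specialize (H ((x - y)/2) ltac:(lra)). lra.
Qed.

Lemma expdiff u v m : m <= u -> m <= v -> Rabs (exp (-u) - exp (-v)) <= Rabs (u - v) * exp (-m).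
Proof.
  assert (key : forall u v, m <= v -> v <= u -> exp (-v) - exp (-u) <= (u - v) * exp (-m)).
  { intros u0 v0 Hv Hvu.
    replace (exp (-u0)) with (exp (-v0) * exp (- (u0 - v0))) by (rewrite <- exp_plus; f_equal; ring).
    pose proof (exp_ineq1_le (- (u0 - v0))).
    assert (exp (-v0) <= exp (-m)) by (destruct (Req_dec v0 m); [subst; lra| apply Rlt_le, exp_increasing; lra]).
    pose proof (exp_pos (-v0)).
    assert (exp (-v0) - exp (-v0) * exp (- (u0 - v0)) = exp (-v0) * (1 - exp (- (u0 - v0)))) by ring.
    nra. }
  intros Hu Hv. destruct (Rle_or_lt v u) as [Hvu|Huv].
  - assert (exp (-u) <= exp (-v)) by (destruct (Req_dec u v); [subst; lra| apply Rlt_le, exp_increasing; lra]).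
    rewrite Rabs_left1 by lra. rewrite Rabs_right by lra. specialize (key u v Hv Hvu). lra.
  - assert (exp (-v) <= exp (-u)) by (apply Rlt_le, exp_increasing; lra).
    rewrite Rabs_right by lra. rewrite Rabs_left by lra. specialize (key v u Hu (Rlt_le _ _ Huv)). lra.
Qed.

Lemma pdf_lip a a' x : 1 <= a -> 1 <= a' -> 0 <= x ->
  Rabs (exp_pdf a x - exp_pdf a' x) <= Rabs (a - a') * (exp (-x) * (1 + Rmax a a' * x)).
Proof.
  intros Ha Ha' Hx. unfold exp_pdf.
  replace (a * exp (- (a * x)) - a' * exp (- (a' * x)))
    with ((a - a') * exp (- (a*x)) + a' * (exp (- (a*x)) - exp (- (a'*x)))) by ring.
  eapply Rle_trans; [apply Rabs_triang|]. rewrite !Rabs_mult.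
  assert (H1 : Rabs (exp (- (a*x))) <= exp (-x)).
  { rewrite Rabs_right by (apply Rle_ge, Rlt_le, exp_pos).
    destruct (Req_dec (a*x) x) as [Z|Z]; [rewrite Z; lra|]. apply Rlt_le, exp_increasing. nra. }
  assert (H2 : Rabs (exp (- (a*x)) - exp (- (a'*x))) <= Rabs (a - a') * x * exp (-x)).
  { eapply Rle_trans; [apply (expdiff (a*x) (a'*x) x); nra|].
    replace (a*x - a'*x) with ((a - a') * x) by ring. rewrite Rabs_mult, (Rabs_right x) by lra. lra. }
  rewrite (Rabs_right a') by lra.
  pose proof (Rmax_l a a'). pose proof (Rmax_r a a').
  pose proof (Rabs_pos (a - a')). pose proof (exp_pos (-x)).
  assert (a' * (Rabs (a - a') * x * exp (-x)) <= Rmax a a' * (Rabs (a - a') * x * exp (-x))).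
  { apply Rmult_le_compat_r; [|lra]. apply Rmult_le_pos; [|lra]. apply Rmult_le_pos; lra. }
  assert (Rabs (a - a') * Rabs (exp (- (a*x))) <= Rabs (a - a') * exp (-x)) by (apply Rmult_le_compat_l; lra).
  assert (a' * Rabs (exp (- (a*x)) - exp (- (a'*x))) <= a' * (Rabs (a - a') * x * exp (-x))) by (apply Rmult_le_compat_l; lra).
  nra.
Qed.

Lemma K_int A e B : 0 <= A -> 0 < e -> e <= B -> RInt (fun x => exp (-x) * (1 + A*x)) e B <= 1 + 2*A.
Proof.
  intros HA He HB.
  set (F := fun x => - (1 + A + A*x) * exp (-x)).
  rewrite (RInt_val _ e B (F B - F e)).
  2:{ apply ftc. - intros x _. unfold F. auto_derive; auto. ring.
      - intros x _. apply cont_of_pt, cont_of_der. auto_derive; auto. }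
  unfold F. pose proof (exp_pos (-B)). pose proof (exp_pos (-e)).
  assert (exp (-e) <= 1) by (rewrite <- exp_0; apply Rlt_le, exp_increasing; lra).
  assert (e * exp (-e) <= 1).
  { pose proof (exp_ineq1_le e). assert (exp e * exp (-e) = 1) by (rewrite <- exp_plus; replace (e + -e) with 0 by ring; apply exp_0).
    nra. }
  assert (0 <= (1 + A + A*B) * exp (-B)) by (apply Rmult_le_pos; nra).
  nra.
Qed.

Lemma RInt_diff_bound b e eta a a' B : 0<b -> 0<e -> 0<eta -> 1 <= a -> 1 <= a' -> e <= B ->
  RInt (fun x => exp_pdf a x * Hc b e eta x) e B <=
  RInt (fun x => exp_pdf a' x * Hc b e eta x) e B + Rabs (a - a') * (1 + 2 * Rmax a a').
Proof.
  intros Hb He Heta Ha Ha' HB.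
  set (K := fun x => exp (-x) * (1 + Rmax a a' * x)).
  assert (Kc : forall x, continuity_pt K x) by (intros; apply cont_of_der; unfold K; auto_derive; auto).
  assert (HK := K_int (Rmax a a') e B ltac:(pose proof (Rmax_l a a'); lra) He HB). fold K in HK.
  apply Rle_trans with (RInt (fun x => exp_pdf a' x * Hc b e eta x + Rabs (a - a') * K x) e B).
  - apply RInt_le; auto.
    + apply ex_RInt_cont; intros; apply q_cont; auto.
    + apply ex_RInt_plusR; [apply ex_RInt_cont; intros; apply q_cont; auto|].
      apply ex_RInt_scalR, ex_RInt_cont; auto.
    + intros x Hx.
      pose proof (pdf_lip a a' x Ha Ha' ltac:(lra)). fold K in H.
      pose proof (Hc_ge0 b e eta x Hb He Heta). pose proof (Hc_le1 b e eta x Hb He Heta).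
      assert ((exp_pdf a x - exp_pdf a' x) * Hc b e eta x <= Rabs (a - a') * K x).
      { apply Rle_trans with (Rabs (exp_pdf a x - exp_pdf a' x)); [|auto].
        pose proof (Rle_abs (exp_pdf a x - exp_pdf a' x)). pose proof (Rabs_pos (exp_pdf a x - exp_pdf a' x)).
        destruct (Rle_or_lt 0 (exp_pdf a x - exp_pdf a' x)); nra. }
      nra.
  - rewrite RInt_plusR; [|apply ex_RInt_cont; intros; apply q_cont; auto| apply ex_RInt_scalR, ex_RInt_cont; auto].
    rewrite RInt_scalR by (apply ex_RInt_cont; auto).
    pose proof (Rabs_pos (a - a')).
    apply Rplus_le_compat_l. apply Rmult_le_compat_l; auto.
Qed.

Lemma Gl_lip b e eta a a' L L' : 0<b -> 0<e -> 0<eta -> 1 <= a -> 1 <= a' ->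
  is_RInt_infty (fun x => exp_pdf a x * Hc b e eta x) e L ->
  is_RInt_infty (fun x => exp_pdf a' x * Hc b e eta x) e L' ->
  Rabs (L - L') <= Rabs (a - a') * (1 + 2 * Rmax a a').
Proof.
  intros Hb He Heta Ha Ha' [I1 H1] [I2 H2].
  apply le_eps. intros eps Heps.
  destruct (H1 (eps/2) ltac:(lra)) as [M HM]. destruct (H2 (eps/2) ltac:(lra)) as [M' HM'].
  set (B := Rmax e (Rmax M M')).
  assert (HBe : e <= B) by apply Rmax_l.
  assert (HBM : M <= B) by (unfold B; pose proof (Rmax_r e (Rmax M M')); pose proof (Rmax_l M M'); lra).
  assert (HBM' : M' <= B) by (unfold B; pose proof (Rmax_r e (Rmax M M')); pose proof (Rmax_r M M'); lra).
  destruct (I1 B HBe) as [pr]. destruct (I2 B HBe) as [pr'].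
  specialize (HM B pr HBM). specialize (HM' B pr' HBM').
  rewrite RI_RInt in HM, HM'.
  pose proof (RInt_diff_bound b e eta a a' B Hb He Heta Ha Ha' HBe).
  pose proof (RInt_diff_bound b e eta a' a B Hb He Heta Ha' Ha HBe).
  rewrite Rmax_comm, <- Rabs_Ropp, Ropp_minus_distr in H0.
  apply Rabs_def2 in HM. apply Rabs_def2 in HM'.
  apply Rabs_le. lra.
Qed.

Lemma tau_pos Rt : 0 < Rt -> 0 < tau Rt.
Proof.
  intros H. unfold tau, Rpower. pose proof ln_lt_2.
  assert (exp 0 < exp (2 * Rt * ln 2)) by (apply exp_increasing; nra). rewrite exp_0 in H1. lra.
Qed.

Lemma dens_cont lam RD r : continuity_pt (dens_closest lam RD) r.
Proof. apply cont_of_der. unfold dens_closest. auto_derive. auto. Qed.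

Lemma is_RInt_of_cont f a b : (forall x, continuity_pt f x) -> Defs.is_RInt f a b (RInt f a b).
Proof. intros H. apply bridge. apply (@RInt_correct R_CompleteNormedModule). apply ex_RInt_cont; auto. Qed.

Lemma exists_P2 d lam RD eta Rt P :
  0 < d -> 0 < lam -> 0 < RD -> 0 < eta <= 1 -> 0 < Rt -> 0 < P ->
  exists v, is_P2 d lam RD eta Rt P v.
Proof.
  intros Hd Hlam HRD [Heta Heta1] HRt HP.
  unfold is_P2.
  set (e := epsP Rt P). set (b := 1 + d^2).
  assert (He : 0 < e) by (unfold e, epsP; apply Rdiv_lt_0_compat; auto; apply tau_pos; auto).
  assert (Hb : 0 < b) by (unfold b; nra).
  assert (HG : forall r, exists L, is_RInt_infty (fun x => exp_pdf (1 + r^2) x * Hc b e eta x) e L).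
  { intros r. apply Gl_exists; auto. nra. }
  set (G := fun r => proj1_sig (constructive_indefinite_description _ (HG r))).
  assert (HGp : forall r, is_RInt_infty (fun x => exp_pdf (1 + r^2) x * Hc b e eta x) e (G r)).
  { intros r. unfold G. destruct (constructive_indefinite_description _ (HG r)); simpl; auto. }
  assert (Gc : forall r0, continuity_pt G r0).
  { intros r0. apply cont_eps. intros eps Heps.
    set (C := (2 * Rabs r0 + 1) * (3 + 2 * (Rabs r0 + 1)^2)).
    assert (HC : 0 < C) by (unfold C; pose proof (Rabs_pos r0); apply Rmult_lt_0_compat; nra).
    exists (Rmin 1 (eps / C)). split. { apply Rmin_pos; [lra| apply Rdiv_lt_0_compat; lra]. }
    intros r Hr.
    assert (Hr1 : Rabs (r - r0) < 1) by (pose proof (Rmin_l 1 (eps/C)); lra).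
    assert (Hr2 : Rabs (r - r0) < eps / C) by (pose proof (Rmin_r 1 (eps/C)); lra).
    pose proof (Gl_lip b e eta (1 + r^2) (1 + r0^2) (G r) (G r0) Hb He Heta ltac:(nra) ltac:(nra) (HGp r) (HGp r0)) as HL.
    eapply Rle_lt_trans; [exact HL|].
    replace (1 + r^2 - (1 + r0^2)) with ((r - r0) * (r + r0)) by ring.
    rewrite Rabs_mult.
    assert (Hsum : Rabs (r + r0) <= 2 * Rabs r0 + 1).
    { replace (r + r0) with ((r - r0) + 2 * r0) by ring. eapply Rle_trans; [apply Rabs_triang|].
      rewrite Rabs_mult, (Rabs_right 2) by lra. lra. }
    assert (Hmax : 1 + 2 * Rmax (1 + r^2) (1 + r0^2) <= 3 + 2 * (Rabs r0 + 1)^2).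
    { assert (r^2 <= (Rabs r0 + 1)^2).
      { rewrite <- (Rabs_right (r^2)) by (apply Rle_ge, pow2_ge_0). rewrite <- RPow_abs.
        assert (Rabs r <= Rabs r0 + 1).
        { replace r with ((r - r0) + r0) by ring. eapply Rle_trans; [apply Rabs_triang|]. lra. }
        pose proof (Rabs_pos r). nra. }
      assert (r0^2 <= (Rabs r0 + 1)^2).
      { rewrite <- (Rabs_right (r0^2)) by (apply Rle_ge, pow2_ge_0). rewrite <- RPow_abs.
        pose proof (Rabs_pos r0). nra. }
      apply Rmax_case_strong; intros; lra. }
    pose proof (Rabs_pos (r - r0)). pose proof (Rabs_pos (r + r0)). pose proof (Rabs_pos r0).
    apply Rle_lt_trans with (Rabs (r - r0) * C).
    { unfold C. rewrite Rmult_assoc. apply Rmult_le_compat_l; auto.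
      apply Rmult_le_compat; auto; try lra. pose proof (Rmax_l (1 + r^2) (1 + r0^2)). nra. }
    apply (Rmult_lt_compat_r C) in Hr2; auto. replace (eps / C * C) with eps in Hr2 by (field; lra). lra. }
  eexists. cbv zeta. exists (Hc b e eta), G,
    (RInt (fun r => dens_closest lam RD r * G r) 0 RD),
    (RInt (fun r => dens_closest lam RD r * exp_cdf (1 + r ^ 2) e) 0 RD).
  split; [|split; [|split; [|split]]].
  - intros x Hx. apply Hc_int; auto.
  - intros r _. apply HGp.
  - apply is_RInt_of_cont. intros x. apply continuity_pt_mult; [apply dens_cont | apply Gc].
  - apply is_RInt_of_cont. intros x. apply continuity_pt_mult; [apply dens_cont |].
    apply cont_of_der. unfold exp_cdf. auto_derive. auto.
  - reflexivity.
Qed.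

Lemma cdf_le b t : 0 <= t -> 0 < b -> 0 <= exp_cdf b t <= b * t.
Proof.
  intros Ht Hb. unfold exp_cdf. pose proof (exp_ineq1_le (- (b*t))).
  assert (exp (- (b*t)) <= 1) by (rewrite <- exp_0; destruct (Req_dec (b*t) 0) as [Z|Z];
    [rewrite Z, Ropp_0; lra| apply Rlt_le, exp_increasing; nra]). lra.
Qed.

Lemma H_bounds b e eta x h : 0<b -> 0<e -> 0<eta -> e<x ->
  Defs.is_RInt (fun y => exp_pdf b y * exp_cdf b (e - eta*y*(x-e))) 0 (e/(eta*(x-e))) h ->
  0 <= h /\ h <= b*e /\ h <= b*b*e*e/(eta*(x-e)).
Proof.
  intros Hb He Heta Hx [pr Hpr]. subst h.
  assert (Hs : 0 < eta*(x-e)) by (apply Rmult_lt_0_compat; lra).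
  set (Y := e/(eta*(x-e))).
  assert (HY : 0 < Y) by (apply Rdiv_lt_0_compat; lra).
  assert (pw : forall y, 0 < y < Y -> 0 <= exp_pdf b y * exp_cdf b (e - eta*y*(x-e)) <= exp_pdf b y * (b*e)).
  { intros y Hy. assert (Ht : 0 <= e - eta*y*(x-e) <= e).
    { split; [|nra]. destruct Hy as [_ Hy]. apply (Rmult_lt_compat_r (eta*(x-e))) in Hy; [|lra].
      unfold Y in Hy. replace (e/(eta*(x-e)) * (eta*(x-e))) with e in Hy by (field; lra). nra. }
    pose proof (cdf_le b _ (proj1 Ht) Hb).
    assert (0 <= exp_pdf b y) by (unfold exp_pdf; pose proof (exp_pos (- (b*y))); nra).
    split. apply Rmult_le_pos; lra. apply Rmult_le_compat_l; auto. assert (b * (e - eta*y*(x-e)) <= b*e) by (apply Rmult_le_compat_l; lra). lra. }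
  split; [|split].
  - apply RI_ge0; [lra|]. intros; apply pw; auto.
  - rewrite RI_RInt. apply Rle_trans with (RInt (fun y => b*e * exp_pdf b y) 0 Y).
    + apply RInt_le; [lra| apply ex_RInt_of_pr; exact pr| apply ex_RInt_scalR, ex_RInt_cont; intros; apply pdf_cont|].
      intros y Hy. specialize (pw y Hy). lra.
    + rewrite RInt_scalR by (apply ex_RInt_cont; intros; apply pdf_cont).
      rewrite pdf_int by auto. rewrite Rmult_0_r, Ropp_0, exp_0.
      pose proof (exp_pos (- (b*Y))). assert (0 < b*e) by nra. nra.
  - pose proof (RI_bounds _ 0 Y 0 (b*(b*e)) pr (Rlt_le _ _ HY)) as HB.
    assert (HH : b * (b * e) * (Y - 0) <= b*b*e*e/(eta*(x-e))) by (unfold Y; right; field; lra).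
    eapply Rle_trans; [|exact HH].
    apply HB. intros y Hy. specialize (pw y Hy). split; [lra|].
    assert (exp_pdf b y <= b) by (unfold exp_pdf; assert (exp (- (b*y)) <= 1) by (rewrite <- exp_0; apply Rlt_le, exp_increasing; nra); nra).
    assert (exp_pdf b y * (b*e) <= b*(b*e)) by (apply Rmult_le_compat_r; nra). lra.
Qed.

Lemma ln_int K e u v : 0 < e -> e < u -> u <= v ->
  RInt (fun x => K * / (x - e)) u v = K * (ln (v - e) - ln (u - e)).
Proof.
  intros He Hu Huv. apply RInt_val.
  replace (K * (ln (v - e) - ln (u - e))) with ((fun x => K * ln (x - e)) v - (fun x => K * ln (x - e)) u) by ring.
  apply (ftc (fun x => K * ln (x - e)) (fun x => K * / (x - e))).
  - intros x Hx. rewrite Rmin_left in Hx by lra. rewrite Rmax_right in Hx by lra.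
    auto_derive. lra. field. lra.
  - intros x Hx. rewrite Rmin_left in Hx by lra. rewrite Rmax_right in Hx by lra.
    apply cont_of_pt, cont_of_der. auto_derive. lra.
Qed.

Lemma G_bounds b e eta a A H g : 0<b -> 0<e -> e < 1 -> 0<eta -> 1 <= a <= A ->
  (forall x, e<x -> 0 <= H x /\ H x <= b*e /\ H x <= b*b*e*e/(eta*(x-e))) ->
  is_RInt_infty (fun x => exp_pdf a x * H x) e g ->
  0 <= g /\ g <= A*b*e*e + A*(b*b*e*e/eta)*(- ln e) + b*b*e*e/eta.
Proof.
  intros Hb He He1 Heta [Ha1 Ha2] HH [Ig Hg].
  set (q := fun x => exp_pdf a x * H x).
  set (K := b*b*e*e/eta).
  assert (HK : 0 < K) by (unfold K; apply Rdiv_lt_0_compat; [repeat apply Rmult_lt_0_compat; lra|lra]).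
  assert (pdf_le : forall x, 0 <= x -> 0 <= exp_pdf a x <= A).
  { intros x Hx. unfold exp_pdf. pose proof (exp_pos (- (a*x))).
    assert (exp (- (a*x)) <= 1) by (rewrite <- exp_0; destruct (Req_dec (a*x) 0) as [Z|Z];
       [rewrite Z, Ropp_0; lra | apply Rlt_le, exp_increasing; nra]). nra. }
  assert (main : forall eps, 0 < eps -> -eps <= g /\ g <= A*b*e*e + A*K*(- ln e) + K + eps).
  { intros eps Heps. destruct (Hg eps Heps) as [M HM].
    set (B := Rmax (e+1) M).
    assert (HB1 : e + 1 <= B) by apply Rmax_l. assert (HB2 : M <= B) by apply Rmax_r.
    destruct (Ig B ltac:(lra)) as [pr].
    specialize (HM B pr HB2). apply Rabs_def2 in HM.
    assert (Hlow : 0 <= RiemannInt pr).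
    { apply RI_ge0; [lra|]. intros x Hx. specialize (HH x (proj1 Hx)). specialize (pdf_le x ltac:(lra)).
      apply Rmult_le_pos; lra. }
    rewrite RI_RInt in HM, Hlow. fold q in HM, Hlow.
    assert (exq : ex_RInt q e B) by (apply ex_RInt_of_pr; exact pr).
    assert (ex1 : ex_RInt q e (e+1)) by (apply (ex_RInt_Ch1 q e (e+1) B); [lra|auto]).
    assert (ex3 : ex_RInt q (e+1) B) by (apply (ex_RInt_Ch2 q e (e+1) B); [lra|auto]).
    assert (exa : ex_RInt q e (2*e)) by (apply (ex_RInt_Ch1 q e (2*e) (e+1)); [lra|auto]).
    assert (exb : ex_RInt q (2*e) (e+1)) by (apply (ex_RInt_Ch2 q e (2*e) (e+1)); [lra|auto]).
    rewrite <- (RInt_ChaslesR q e (e+1) B ex1 ex3) in HM, Hlow.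
    rewrite <- (RInt_ChaslesR q e (2*e) (e+1) exa exb) in HM, Hlow.
    assert (I1 : RInt q e (2*e) <= A*b*e*e).
    { apply Rle_trans with (RInt (fun _ => A*(b*e)) e (2*e)).
      - apply RInt_le; [lra|auto|apply ex_RInt_constR|].
        intros x Hx. specialize (HH x (proj1 Hx)). specialize (pdf_le x ltac:(lra)). unfold q.
        apply Rmult_le_compat; lra.
      - rewrite RInt_constR. right; ring. }
    assert (I2 : RInt q (2*e) (e+1) <= A*K*(- ln e)).
    { apply Rle_trans with (RInt (fun x => (A*K) * / (x - e)) (2*e) (e+1)).
      - apply RInt_le; [lra|auto| |].
        + apply (@ex_RInt_continuous R_CompleteNormedModule). intros z Hz. rewrite Rmin_left in Hz by lra. rewrite Rmax_right in Hz by lra.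
          apply cont_of_pt, cont_of_der. auto_derive. lra.
        + intros x Hx. assert (Hx' : e < x) by lra. specialize (HH x Hx'). specialize (pdf_le x ltac:(lra)). unfold q.
          replace (A * K * / (x - e)) with (A * (b*b*e*e/(eta*(x-e)))) by (unfold K; field; lra).
          apply Rmult_le_compat; lra.
      - rewrite ln_int by lra. replace (e + 1 - e) with 1 by ring. replace (2*e - e) with e by ring.
        rewrite ln_1. right; ring. }
    assert (I3 : RInt q (e+1) B <= K).
    { apply Rle_trans with (RInt (fun x => K * exp_pdf a x) (e+1) B).
      - apply RInt_le; [lra|auto| apply ex_RInt_scalR, ex_RInt_cont; intros; apply pdf_cont |].
        intros x Hx. assert (Hx' : e < x) by lra. specialize (HH x Hx'). specialize (pdf_le x ltac:(lra)). unfold q.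
        assert (H x <= K).
        { apply Rle_trans with (b*b*e*e/(eta*(x-e))); [tauto|]. unfold K.
          apply Rmult_le_compat_l; [nra|]. apply Rinv_le_contravar; [lra|]. nra. }
        rewrite Rmult_comm. apply Rmult_le_compat_r; lra.
      - rewrite RInt_scalR by (apply ex_RInt_cont; intros; apply pdf_cont).
        rewrite pdf_int by lra. pose proof (exp_pos (- (a*B))).
        assert (exp (- (a*(e+1))) <= 1) by (apply exp_le1; apply Rmult_le_pos; lra).
        nra. }
    split; lra. }
  split.
  - apply Rnot_lt_le. intros Hlt. destruct (main (- g / 2) ltac:(lra)). lra.
  - apply le_eps. intros eps Heps. destruct (main eps Heps). fold K. lra.
Qed.

Lemma pos3 lam RD : 0 < lam -> 0 < RD -> 0 < PI*lam*RD^2.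
Proof. intros. apply Rmult_lt_0_compat; [apply Rmult_lt_0_compat; [apply PI_RGT_0|auto]|apply pow_lt; auto]. Qed.

Lemma zeta_pos lam RD : 0 < lam -> 0 < RD -> 0 < zeta lam RD.
Proof.
  intros Hl HR. unfold zeta. apply Rinv_0_lt_compat.
  pose proof PI_RGT_0.
  assert (exp (- (PI * lam * RD^2)) < 1).
  { rewrite <- exp_0. apply exp_increasing. pose proof (pos3 lam RD Hl HR). lra. }
  lra.
Qed.

Lemma dens_int lam RD : 0 < lam -> 0 < RD -> RInt (dens_closest lam RD) 0 RD = 1.
Proof.
  intros Hl HR. pose proof (zeta_pos lam RD Hl HR) as Hz.
  apply RInt_val.
  replace 1 with ((fun r => - zeta lam RD * exp (- (PI * lam * r^2))) RD - (fun r => - zeta lam RD * exp (- (PI * lam * r^2))) 0).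
  2:{ cbv beta. unfold zeta. replace (PI*lam*0^2) with 0 by ring. rewrite Ropp_0, exp_0. field.
      assert (exp (- (PI * lam * RD^2)) < 1).
      { rewrite <- exp_0. apply exp_increasing. pose proof (pos3 lam RD Hl HR). lra. }
      lra. }
  apply (ftc (fun r => - zeta lam RD * exp (- (PI * lam * r^2))) (dens_closest lam RD) 0 RD).
  - intros x _. auto_derive; auto. unfold dens_closest. replace (x*(x*1)) with (x^2) by ring. ring.
  - intros x _. apply cont_of_pt, dens_cont.
Qed.

Lemma dens_bd lam RD r : 0 < lam -> 0 < RD -> 0 <= r <= RD ->
  0 <= dens_closest lam RD r <= 2 * zeta lam RD * PI * lam * RD.
Proof.
  intros Hl HR Hr. pose proof (zeta_pos lam RD Hl HR). pose proof PI_RGT_0.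
  unfold dens_closest. pose proof (exp_pos (- (PI * lam * r^2))).
  assert (exp (- (PI * lam * r^2)) <= 1) by (apply exp_le1; apply Rmult_le_pos; [apply Rmult_le_pos; lra | nra]).
  assert (0 <= 2 * zeta lam RD * PI * lam) by (apply Rmult_le_pos; [apply Rmult_le_pos; [apply Rmult_le_pos|]|]; lra).
  split.
  - apply Rmult_le_pos; [|lra]. apply Rmult_le_pos; lra.
  - replace (2 * zeta lam RD * PI * lam * r * exp (- (PI * lam * r ^ 2))) with
      ((2 * zeta lam RD * PI * lam) * (r * exp (- (PI * lam * r ^ 2)))) by ring.
    replace (2 * zeta lam RD * PI * lam * RD) with ((2 * zeta lam RD * PI * lam) * RD) by ring.
    apply Rmult_le_compat_l; auto. nra.
Qed.

Lemma cdf_low t : 0 <= t <= 1 -> t/2 <= 1 - exp (- t).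
Proof.
  intros Ht. pose proof (exp_ineq1_le t).
  assert (E : exp t * exp (-t) = 1) by (rewrite <- exp_plus; replace (t + -t) with 0 by ring; apply exp_0).
  pose proof (exp_pos (-t)).
  assert (exp (-t) * (1 + t) <= 1) by nra.
  nra.
Qed.

Lemma exp_mono_le x y : x <= y -> exp x <= exp y.
Proof. intros H. destruct (Req_dec x y); [subst; lra| apply Rlt_le, exp_increasing; lra]. Qed.

Lemma P2_bounds d lam RD eta Rt P v :
  0 < d -> 0 < lam -> 0 < RD -> 0 < eta <= 1 -> 0 < Rt -> 0 < P ->
  epsP Rt P < 1 -> (1 + d^2) * epsP Rt P <= 1 ->
  is_P2 d lam RD eta Rt P v ->
  (1 + d^2)/4 * (epsP Rt P)^2 <= v /\
  v <= (epsP Rt P)^2 * (RD * (2 * zeta lam RD * PI * lam * RD) * (2 * (1 + RD^2) * (1 + d^2) + (1 + d^2)*(1 + d^2)/eta)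
     + RD * (2 * zeta lam RD * PI * lam * RD) * (1 + RD^2) * (1 + d^2)*(1 + d^2)/eta * (- ln (epsP Rt P))).
Proof.
  intros Hd Hl HR [Heta Heta1] HRt HP He1 Hbe Hv.
  unfold is_P2 in Hv. cbv zeta in Hv.
  set (e := epsP Rt P) in *. set (b := 1 + d^2) in *.
  set (A := 1 + RD^2). set (Fm := 2 * zeta lam RD * PI * lam * RD).
  assert (He : 0 < e) by (unfold e, epsP; apply Rdiv_lt_0_compat; auto; apply tau_pos; auto).
  assert (Hb : 1 <= b) by (unfold b; pose proof (pow2_ge_0 d); lra).
  assert (HFm : 0 <= Fm) by (pose proof (dens_bd lam RD 0 Hl HR ltac:(lra)); unfold Fm; lra).
  destruct Hv as [H [G [T1 [T2 [hH [hG [hT1 [hT2 hv]]]]]]]].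
  assert (HHb : forall x, e < x -> 0 <= H x /\ H x <= b*e /\ H x <= b*b*e*e/(eta*(x-e))).
  { intros x Hx. apply H_bounds; auto; lra. }
  set (Kg := A*b*e*e + A*(b*b*e*e/eta)*(- ln e) + b*b*e*e/eta).
  assert (HGb : forall r, 0 <= r <= RD -> 0 <= G r <= Kg).
  { intros r Hr. apply (G_bounds b e eta (1 + r^2) A H); auto; try lra.
    unfold A. split; [nra|]. assert (r^2 <= RD^2) by nra. lra. }
  destruct hT1 as [pr1 HT1]. destruct hT2 as [pr2 HT2].
  assert (T1b : 0 <= T1 <= Fm * Kg * RD).
  { rewrite <- HT1. pose proof (RI_bounds _ 0 RD 0 (Fm * Kg) pr1 (Rlt_le _ _ HR)) as HB.
    replace (Fm * Kg * RD) with (Fm * Kg * (RD - 0)) by ring.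
    replace 0 with (0 * (RD - 0)) at 1 by ring. apply HB.
    intros r Hr. pose proof (dens_bd lam RD r Hl HR ltac:(lra)); match goal with Hd: 0 <= dens_closest _ _ _ <= _ |- _ => change (2 * zeta lam RD * PI * lam * RD) with Fm in Hd end. pose proof (HGb r ltac:(lra)).
    split; [apply Rmult_le_pos; lra|]. apply Rmult_le_compat; lra. }
  assert (T2b : e/2 <= T2 <= Fm * (A*e) * RD).
  { rewrite <- HT2. split.
    - rewrite RI_RInt. apply Rle_trans with (RInt (fun r => exp_cdf 1 e * dens_closest lam RD r) 0 RD).
      + rewrite RInt_scalR by (apply ex_RInt_cont; apply dens_cont). rewrite dens_int by auto.
        unfold exp_cdf. rewrite Rmult_1_l, Rmult_1_r. apply cdf_low. lra.
      + apply RInt_le; [lra| apply ex_RInt_scalR, ex_RInt_cont, dens_cont| apply ex_RInt_of_pr; exact pr2|].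
        intros r Hr. pose proof (dens_bd lam RD r Hl HR ltac:(lra)); match goal with Hd: 0 <= dens_closest _ _ _ <= _ |- _ => change (2 * zeta lam RD * PI * lam * RD) with Fm in Hd end. rewrite Rmult_comm.
        apply Rmult_le_compat_l; [lra|]. unfold exp_cdf.
        assert (exp (- ((1 + r^2) * e)) <= exp (- (1*e))) by (apply exp_mono_le; nra). lra.
    - pose proof (RI_bounds _ 0 RD 0 (Fm * (A*e)) pr2 (Rlt_le _ _ HR)) as HB.
      replace (Fm * (A*e) * RD) with (Fm * (A*e) * (RD - 0)) by ring. apply HB.
      intros r Hr. pose proof (dens_bd lam RD r Hl HR ltac:(lra)); match goal with Hd: 0 <= dens_closest _ _ _ <= _ |- _ => change (2 * zeta lam RD * PI * lam * RD) with Fm in Hd end.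
      pose proof (cdf_le (1 + r^2) e (Rlt_le _ _ He) ltac:(nra)).
      split; [apply Rmult_le_pos; lra|]. apply Rmult_le_compat; try lra.
      assert (r^2 <= RD^2) by nra. unfold A. nra. }
  pose proof (cdf_le b e (Rlt_le _ _ He) ltac:(lra)) as Hcb.
  assert (Hcb2 : b*e/2 <= exp_cdf b e) by (unfold exp_cdf; apply cdf_low; nra).
  rewrite hv. split.
  - assert (0 <= b*e/2) by nra. assert (0 <= e/2) by lra.
    assert (b*e/2 * (e/2) <= exp_cdf b e * T2) by (apply Rmult_le_compat; lra).
    replace (b / 4 * e ^ 2) with (b*e/2*(e/2)) by field. lra.
  - apply Rle_trans with (Fm * Kg * RD + (b*e) * (Fm * (A*e) * RD)).
    + apply Rplus_le_compat; [lra|]. apply Rmult_le_compat; lra.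
    + right. unfold Kg. field. lra.
Qed.

Lemma ln_le_self y : 0 < y -> ln y < y.
Proof. intros H. pose proof (exp_ineq1_le (ln y)). rewrite exp_ln in H0 by auto. lra. Qed.

Lemma ln_le_sqrt L : 0 < L -> ln L <= 2 * sqrt L.
Proof.
  intros H. assert (Hs : 0 < sqrt L) by (apply sqrt_lt_R0; auto).
  rewrite <- (sqrt_sqrt L) at 1 by lra. rewrite ln_mult by auto.
  pose proof (ln_le_self _ Hs). lra.
Qed.

Lemma asym tau kap C1 C2 eps : 0 < tau -> 0 < kap -> 0 < C1 -> 0 <= C2 -> 0 < eps ->
  exists L0, 1 <= L0 /\ forall P v, L0 < ln P -> 0 < P ->
    kap * (tau/P)^2 <= v -> v <= (tau/P)^2 * (C1 + C2 * (- ln (tau/P))) ->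
    Rabs (- (ln v / ln P) - 2) < eps.
Proof.
  intros Ht Hk HC1 HC2 He.
  set (C3 := C1 + C2 + C2 * Rabs (ln tau)).
  assert (HC3 : 0 < C3) by (unfold C3; pose proof (Rabs_pos (ln tau)); nra).
  set (K := Rabs (2 * ln tau + ln C3)). set (K' := Rabs (ln kap + 2 * ln tau)).
  exists (1 + Rabs (ln tau) + 16/(eps*eps) + 2*K/eps + K'/eps).
  assert (HK : 0 <= K) by apply Rabs_pos. assert (HK' : 0 <= K') by apply Rabs_pos.
  assert (0 <= 16/(eps*eps)) by (apply Rdiv_le_0_compat; nra).
  assert (0 <= 2*K/eps) by (apply Rdiv_le_0_compat; lra).
  assert (0 <= K'/eps) by (apply Rdiv_le_0_compat; lra).
  pose proof (Rabs_pos (ln tau)).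
  split; [lra|].
  intros P v HL HP Hlo Hup.
  set (L := ln P) in *.
  assert (HL0 : 0 < L) by lra.
  set (e := tau/P) in *.
  assert (He0 : 0 < e) by (apply Rdiv_lt_0_compat; auto).
  assert (Hlne : ln e = ln tau - L) by (unfold e, Rdiv; rewrite ln_mult, ln_Rinv; auto; try (unfold L; ring); apply Rinv_0_lt_compat; auto).
  assert (Hv : 0 < v) by (assert (0 < kap * e^2) by (apply Rmult_lt_0_compat; auto; apply pow_lt; auto); lra).
  assert (Hln1 : ln kap + 2 * ln e <= ln v).
  { replace (ln kap + 2 * ln e) with (ln (kap * e^2)).
    - apply ln_le; auto. apply Rmult_lt_0_compat; auto; apply pow_lt; auto.
    - rewrite ln_mult; auto; [|apply pow_lt; auto]. simpl. rewrite Rmult_1_r, ln_mult by auto. ring. }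
  set (W := C1 + C2 * (- ln e)) in *.
  assert (HlnL : Rabs (ln tau) < L) by lra.
  assert (HW : C1 <= W) by (unfold W; rewrite Hlne; assert (ln tau <= Rabs (ln tau)) by apply Rle_abs; nra).
  assert (HW3 : W <= C3 * L).
  { unfold W, C3. rewrite Hlne. assert (- ln tau <= Rabs (ln tau)) by (rewrite <- Rabs_Ropp; apply Rle_abs).
    assert (0 <= C1 * (L - 1)) by (apply Rmult_le_pos; lra).
    assert (0 <= C2 * Rabs (ln tau) * (L - 1)) by (apply Rmult_le_pos; [apply Rmult_le_pos|]; lra).
    assert (C2 * (- ln tau) <= C2 * Rabs (ln tau)) by (apply Rmult_le_compat_l; lra).
    nra. }
  assert (Hln2 : ln v <= 2 * ln e + ln C3 + ln L).
  { apply Rle_trans with (ln (e^2 * W)).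
    - apply ln_le; auto.
    - rewrite ln_mult; [|apply pow_lt; auto|lra]. simpl. rewrite Rmult_1_r, ln_mult by auto.
      assert (HH : ln W <= ln (C3 * L)) by (apply ln_le; lra). rewrite ln_mult in HH by auto. lra. }
  pose proof (ln_le_sqrt L HL0) as Hsq.
  assert (Hs : 0 < sqrt L) by (apply sqrt_lt_R0; auto).
  assert (HsL : sqrt L * sqrt L = L) by (apply sqrt_sqrt; lra).
  assert (Hs4 : 4 / eps <= sqrt L).
  { destruct (Rle_or_lt (4/eps) (sqrt L)) as [|Hc]; auto.
    assert (HH : sqrt L * sqrt L < 4/eps * (4/eps)) by (apply Rmult_le_0_lt_compat; lra).
    replace (4/eps * (4/eps)) with (16/(eps*eps)) in HH by (field; lra). lra. }
  assert (H2s : 2 * sqrt L <= eps * L / 2).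
  { replace L with (sqrt L * sqrt L) at 2 by auto.
    apply (Rmult_le_compat_r (sqrt L)) in Hs4; [|lra].
    replace (4/eps * sqrt L) with (4 * sqrt L / eps) in Hs4 by (field; lra).
    assert (4 * sqrt L <= eps * (sqrt L * sqrt L)).
    { apply (Rmult_le_reg_r (/ eps)); [apply Rinv_0_lt_compat; lra|].
      replace (eps * (sqrt L * sqrt L) * / eps) with (sqrt L * sqrt L) by (field; lra). exact Hs4. }
    lra. }
  assert (HKL : K < eps * L / 2).
  { assert (HH : 2*K/eps < L) by lra. apply (Rmult_lt_compat_r eps) in HH; [|lra].
    replace (2*K/eps*eps) with (2*K) in HH by (field; lra). lra. }
  assert (HK'L : K' < eps * L).
  { assert (HH : K'/eps < L) by lra. apply (Rmult_lt_compat_r eps) in HH; [|lra].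
    replace (K'/eps*eps) with K' in HH by (field; lra). lra. }
  assert (Q : - (ln v / L) - 2 = (- (ln v + 2 * L)) / L) by (field; lra).
  rewrite Q. apply Rabs_def1.
  - apply (Rmult_lt_reg_r L); auto. unfold Rdiv. rewrite Rmult_assoc, Rinv_l, Rmult_1_r by lra.
    assert (- (ln kap + 2 * ln tau) <= K') by (unfold K'; rewrite <- Rabs_Ropp; apply Rle_abs).
    rewrite Hlne in Hln1. lra.
  - apply (Rmult_lt_reg_r L); auto. unfold Rdiv. rewrite Rmult_assoc, Rinv_l, Rmult_1_r by lra.
    assert (2 * ln tau + ln C3 <= K) by (unfold K; apply Rle_abs).
    rewrite Hlne in Hln2. lra.
Qed.

Theorem theorem2 (d lam RD eta Rt : R) :
  0 < d -> 0 < lam -> 0 < RD -> 0 < eta <= 1 -> 0 < Rt ->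
  (exists P2 : R -> R, forall P, 0 < P -> is_P2 d lam RD eta Rt P (P2 P)) /\
  (forall P2 : R -> R, (forall P, 0 < P -> is_P2 d lam RD eta Rt P (P2 P)) ->
     forall e, 0 < e -> exists M, forall P, M < P ->
       Rabs (- (ln (P2 P) / ln P) - 2) < e).
Proof.
  intros Hd Hl HR Heta HRt. split.
  - assert (HE : forall P, exists v, 0 < P -> is_P2 d lam RD eta Rt P v).
    { intros P. destruct (Rlt_or_le 0 P) as [HP|HP].
      - destruct (exists_P2 d lam RD eta Rt P Hd Hl HR Heta HRt HP) as [v Hv]. exists v; auto.
      - exists 0. intros; lra. }
    exists (fun P => proj1_sig (constructive_indefinite_description _ (HE P))).
    intros P HP. destruct (constructive_indefinite_description _ (HE P)) as [v Hv]; simpl; auto.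
  - intros P2 HP2 eps Heps.
    set (b := 1 + d^2). set (Fm := 2 * zeta lam RD * PI * lam * RD).
    assert (Hb : 1 <= b) by (unfold b; pose proof (pow2_ge_0 d); lra).
    assert (HFm : 0 < Fm).
    { unfold Fm. pose proof (zeta_pos lam RD Hl HR). pose proof PI_RGT_0.
      apply Rmult_lt_0_compat; [|auto]. apply Rmult_lt_0_compat; [|auto].
      apply Rmult_lt_0_compat; [|auto]. apply Rmult_lt_0_compat; lra. }
    destruct Heta as [Heta Heta1].
    pose proof (tau_pos Rt HRt) as Ht.
    assert (HA : 1 <= 1 + RD^2) by (pose proof (pow2_ge_0 RD); lra).
    assert (HC1 : 0 < RD * Fm * (2 * (1 + RD^2) * b + b*b/eta)).
    { apply Rmult_lt_0_compat; [apply Rmult_lt_0_compat; auto|].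
      assert (0 < b*b/eta) by (apply Rdiv_lt_0_compat; nra). nra. }
    assert (HC2 : 0 <= RD * Fm * (1 + RD^2) * b * b / eta).
    { apply Rlt_le. apply Rdiv_lt_0_compat; auto.
      apply Rmult_lt_0_compat; [|lra]. apply Rmult_lt_0_compat; [|lra].
      apply Rmult_lt_0_compat; [|lra]. apply Rmult_lt_0_compat; lra. }
    destruct (asym (tau Rt) (b/4) _ _ eps Ht ltac:(lra) HC1 HC2 Heps) as [L0 [HL0 HL]].
    exists (Rmax (exp L0) (tau Rt * b)).
    intros P HP.
    assert (HP1 : exp L0 < P) by (pose proof (Rmax_l (exp L0) (tau Rt * b)); lra).
    assert (HP2' : tau Rt * b < P) by (pose proof (Rmax_r (exp L0) (tau Rt * b)); lra).
    assert (HP0 : 0 < P) by (pose proof (exp_pos L0); lra).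
    assert (HlnP : L0 < ln P) by (rewrite <- (ln_exp L0); apply ln_increasing; auto; apply exp_pos).
    assert (Hbe : b * epsP Rt P <= 1).
    { unfold epsP. apply (Rmult_le_reg_r P); auto. field_simplify; [|lra]. lra. }
    assert (He1 : epsP Rt P < 1).
    { assert (0 < epsP Rt P) by (unfold epsP; apply Rdiv_lt_0_compat; auto).
      assert (epsP Rt P <= b * epsP Rt P) by nra.
      assert (b * epsP Rt P < 1 \/ b * epsP Rt P = 1) by lra.
      destruct H1; [lra|].
      unfold epsP in H1. apply (Rmult_eq_compat_r P) in H1.
      replace (b * (tau Rt / P) * P) with (tau Rt * b) in H1 by (field; lra). lra. }
    destruct (P2_bounds d lam RD eta Rt P (P2 P) Hd Hl HR (conj Heta Heta1) HRt HP0 He1 Hbe (HP2 P HP0)) as [Lo Up].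
    fold b Fm in Lo, Up. unfold epsP in Lo, Up.
    apply (HL P (P2 P) HlnP HP0).
    - exact Lo.
    - eapply Rle_trans; [exact Up|]. right. f_equal. all: try (field; lra).
Qed.
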